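(* Let $\nu:S\setminus\{0\}\to C$ be a well-ordered injective valuation on a $\Bbbk$-vector space $S$ and let $\{S_i\}_{i\in I}$ be a family of subspaces of $S$. Then the family is $\nu$-compatible if and only if there exists a basis $\mathbf B$ of $S$ adapted to $\nu$ such that $\mathbf B\cap S_i$ is a basis of $S_i$ for every $i\in I$. Moreover, in this case, for every subset $J\subseteq I$, $\mathbf B\cap\bigcap_{j\in J}S_j$ is a basis of $\bigcap_{j\in J}S_j$, and $\nu\big((\sum_{j\in J}S_j)\setminus\{0\}\big)=\bigcup_{j\in J}\nu(S_j\setminus\{0\})$.
   Context: A valuation on a $\Bbbk$-vector space $S$ with values in a totally ordered set $(C,\le)$ is a map $\nu:S\setminus\{0\}\to C$ such that $\nu(cx)=\nu(x)$ for all $c\in\Bbbk^\times$, $x\ne0$, and $\nu(x+y)\le\max(\nu(x),\nu(y))$ whenever $x,y,x+y\neq 0$. It is well-ordered if its image is well-ordered; it is injective if there is a basis $\mathbf B$ of $S$ with $\nu|_{\mathbf B}$ injective, and such a basis is called adapted to $\nu$. A family $\{S_i\}_{i\in I}$ of subspaces is called $\nu$-compatible if for every nonempty $J\subseteq I$ one has $\nu\big((\bigcap_{j\in J}S_j)\setminus\{0\}\big)=\bigcap_{j\in J}\nu(S_j\setminus\{0\})$ (for $J=\emptyset$ the intersection is read as $S$). *)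

(* Defs.v *)
(* Possibly infinite-dimensional vector spaces: bases are
   arbitrary sets (predicates) of vectors, linear combinations are finite. *)
From Stdlib Require Lists.List.
From HB Require Import structures.
From mathcomp Require Import all_boot all_order all_algebra.
Set Implicit Arguments. Unset Strict Implicit. Unset Printing Implicit Defensive.
Import Order.TTheory GRing.Theory.
Local Open Scope ring_scope.

Section Defs.
Variables (K : fieldType) (V : lmodType K).

Definition subspace (W : V -> Prop) : Prop :=
  [/\ W 0, (forall x y, W x -> W y -> W (x + y)) & (forall (a : K) x, W x -> W (a *: x))].

Definition lin_indep (B : V -> Prop) : Prop :=
  forall (s : seq V) (c : V -> K), uniq s -> (forall v, v \in s -> B v) ->
    \sum_(v <- s) c v *: v = 0 -> forall v, v \in s -> c v = 0.

Definition in_span (B : V -> Prop) (x : V) : Prop :=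
  exists (s : seq V) (c : V -> K), (forall v, v \in s -> B v) /\
    x = \sum_(v <- s) c v *: v.

Definition is_basis_of (W B : V -> Prop) : Prop :=
  [/\ forall b, B b -> W b, lin_indep B & forall x, W x -> in_span B x].

Definition setI_ (A B : V -> Prop) : V -> Prop := fun x => A x /\ B x.

(* intersection of the subspaces S j, j in J (for J empty: all of V) *)
Definition bigcap_sp (I : Type) (J : I -> Prop) (Sf : I -> V -> Prop) : V -> Prop :=
  fun x => forall j, J j -> Sf j x.

Definition bigsum_sp (I : Type) (J : I -> Prop) (Sf : I -> V -> Prop) : V -> Prop :=
  fun x => exists s : seq (I * V),
    (forall p, Stdlib.Lists.List.In p s -> J p.1 /\ Sf p.1 p.2) /\ x = \sum_(p <- s) p.2.

Variables (dC : Order.disp_t) (C : orderType dC).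

(* nu is total on V but only its restriction to V \ {0} matters *)
Definition is_valuation (nu : V -> C) : Prop :=
  (forall (c : K) x, c != 0 -> x != 0 -> nu (c *: x) = nu x) /\
  (forall x y, x != 0 -> y != 0 -> x + y != 0 ->
     (nu (x + y) <= Order.max (nu x) (nu y))%O).

Definition val_image (nu : V -> C) (W : V -> Prop) : C -> Prop :=
  fun c => exists x, [/\ W x, x != 0 & nu x = c].

Definition well_ordered_val (nu : V -> C) : Prop :=
  forall P : C -> Prop, (exists c, P c) -> (forall c, P c -> val_image nu (fun _ => True) c) ->
    exists m, P m /\ forall c, P c -> (m <= c)%O.

Definition adapted_basis (nu : V -> C) (B : V -> Prop) : Prop :=
  is_basis_of (fun _ => True) B /\
  forall b1 b2, B b1 -> B b2 -> nu b1 = nu b2 -> b1 = b2.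

Definition injective_val (nu : V -> C) : Prop := exists B, adapted_basis nu B.

Definition nu_compatible (nu : V -> C) (I : Type) (Sf : I -> V -> Prop) : Prop :=
  forall J : I -> Prop, (exists j, J j) ->
    forall c, val_image nu (bigcap_sp J Sf) c <-> (forall j, J j -> val_image nu (Sf j) c).

End Defs.

(* Main.v *)
Require Import Defs.
From HB Require Import structures.
From mathcomp Require Import all_boot all_order all_algebra.
From Stdlib Require Import Classical ClassicalEpsilon.
Set Implicit Arguments. Unset Strict Implicit. Unset Printing Implicit Defensive.
Import Order.TTheory GRing.Theory.
Local Open Scope ring_scope.

Section Aux.
Variables (K : fieldType) (V : lmodType K).

Lemma sum_count (c : V -> K) (s u : seq V) : uniq u -> {subset s <= u} ->
  \sum_(v <- s) c v *: v = \sum_(v <- u) ((count_mem v s)%:R * c v) *: v.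
Proof.
elim: s => [|a s IH] Hu Hs.
  by rewrite big_nil big1 // => v _; rewrite /= mul0r scale0r.
rewrite big_cons IH //; last by move=> v vs; apply: Hs; rewrite inE vs orbT.
have -> : \sum_(v <- u) ((count_mem v (a :: s))%:R * c v) *: v =
   \sum_(v <- u) ((v == a)%:R * c v) *: v + \sum_(v <- u) ((count_mem v s)%:R * c v) *: v.
  rewrite -big_split /=; apply: eq_bigr => v _.
  by rewrite natrD mulrDl scalerDl [a == v]eq_sym.
congr (_ + _).
rewrite (bigD1_seq a) //=; last by apply: Hs; rewrite inE eqxx.
rewrite eqxx mul1r big1 ?addr0 // => v /negbTE ->; by rewrite mul0r scale0r.
Qed.

Lemma in_span_uniq (P : V -> Prop) x : in_span P x ->
  exists s c, [/\ uniq s, (forall v, v \in s -> P v) & x = \sum_(v <- s) c v *: v].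
Proof.
case=> s [c [Ps ->]]; exists (undup s), (fun v => (count_mem v s)%:R * c v).
split; [exact: undup_uniq | by move=> v; rewrite mem_undup; apply: Ps |].
by apply: sum_count; [exact: undup_uniq | move=> v; rewrite mem_undup].
Qed.

Lemma sum_pad (c : V -> K) (s u : seq V) : uniq s -> uniq u -> {subset s <= u} ->
  \sum_(v <- s) c v *: v = \sum_(v <- u) ((v \in s)%:R * c v) *: v.
Proof.
move=> us uu su; rewrite (sum_count c uu su); apply: eq_bigr => v _.
by rewrite count_uniq_mem.
Qed.

Lemma span0 P : in_span P (0 : V).
Proof. by exists [::], (fun _ => 0); split => //; rewrite big_nil. Qed.

Lemma span_mem (P : V -> Prop) v : P v -> in_span P v.
Proof.
move=> Pv; exists [:: v], (fun _ => 1); split.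
  by move=> w; rewrite inE => /eqP ->.
by rewrite big_seq1 scale1r.
Qed.

Lemma spanZ (P : V -> Prop) a x : in_span P x -> in_span P (a *: x).
Proof.
case=> s [c [Ps ->]]; exists s, (fun v => a * c v); split => //.
rewrite scaler_sumr; apply: eq_bigr => v _; by rewrite scalerA.
Qed.

Lemma spanD (P : V -> Prop) x y : in_span P x -> in_span P y -> in_span P (x + y).
Proof.
move=> /in_span_uniq [s [c [us Ps ->]]] /in_span_uniq [t [d [ut Pt ->]]].
set u := undup (s ++ t).
have uu : uniq u by exact: undup_uniq.
have su : {subset s <= u} by move=> v vs; rewrite mem_undup mem_cat vs.
have tu : {subset t <= u} by move=> v vt; rewrite mem_undup mem_cat vt orbT.
exists u, (fun v => (v \in s)%:R * c v + (v \in t)%:R * d v); split.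
  by move=> v; rewrite mem_undup mem_cat => /orP [/Ps|/Pt].
rewrite (sum_pad c us uu su) (sum_pad d ut uu tu) -big_split.
by apply: eq_bigr => v _; rewrite scalerDl.
Qed.

Lemma span_mono (P Q : V -> Prop) x : (forall v, P v -> Q v) -> in_span P x -> in_span Q x.
Proof. move=> PQ [s [c [Ps E]]]; exists s, c; split => // v /Ps; exact: PQ. Qed.

Lemma lin_indep_mono (P Q : V -> Prop) : (forall v, P v -> Q v) -> lin_indep Q -> lin_indep P.
Proof. move=> PQ li s c us Ps; apply: li => // v /Ps; exact: PQ. Qed.

Lemma sum_zero_coef (s : seq V) c : (forall v, v \in s -> c v = 0) ->
  \sum_(v <- s) c v *: v = 0.
Proof. move=> H; rewrite big_seq big1 // => v /H ->; by rewrite scale0r. Qed.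

Lemma coord_uniq (B : V -> Prop) s t c d : lin_indep B -> uniq s -> uniq t ->
  (forall v, v \in s -> B v) -> (forall v, v \in t -> B v) ->
  \sum_(v <- s) c v *: v = \sum_(v <- t) d v *: v ->
  forall v, v \in s -> c v != 0 -> v \in t /\ c v = d v.
Proof.
move=> li us ut Bs Bt E v vs cv.
set u := undup (s ++ t).
have uu : uniq u by exact: undup_uniq.
have su : {subset s <= u} by move=> w ws; rewrite mem_undup mem_cat ws.
have tu : {subset t <= u} by move=> w wt; rewrite mem_undup mem_cat wt orbT.
have Bu : forall w, w \in u -> B w by move=> w; rewrite mem_undup mem_cat => /orP [/Bs|/Bt].
have : \sum_(w <- u) ((w \in s)%:R * c w - (w \in t)%:R * d w) *: w = 0.
  rewrite (eq_bigr (fun w => ((w \in s)%:R * c w) *: w - ((w \in t)%:R * d w) *: w));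
    last by move=> w _; rewrite scalerBl.
  by rewrite sumrB -sum_pad // -sum_pad // E subrr.
move/(li u _ uu Bu)/(_ v (su v vs)); rewrite vs /=.
case vt: (v \in t); last by rewrite mul0r subr0 mul1r => /eqP; rewrite (negbTE cv).
by rewrite !mul1r => /eqP; rewrite subr_eq0 => /eqP.
Qed.

Lemma basis_nz (B : V -> Prop) : lin_indep B -> forall b, B b -> b != 0.
Proof.
move=> li b Bb; apply/eqP => b0.
have H : (1:K) = 0.
  apply: (li [:: b] (fun _ => 1) _ _ _ b (mem_head _ _)) => //.
    by move=> v; rewrite inE => /eqP ->.
  by rewrite big_seq1 scale1r b0.
by move: (oner_neq0 K); rewrite H eqxx.
Qed.

Variables (dC : Order.disp_t) (C : orderType dC) (nu : V -> C).
Hypothesis hnu : is_valuation nu.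

Lemma nuN x : x != 0 -> nu (- x) = nu x.
Proof.
move=> x0; rewrite -scaleN1r; apply: (proj1 hnu) => //; by rewrite oppr_eq0 oner_eq0.
Qed.

Lemma nu_strict x y : x != 0 -> y != 0 -> (nu x < nu y)%O -> x + y != 0 /\ nu (x + y) = nu y.
Proof.
move=> x0 y0 lt.
have xy0 : x + y != 0.
  apply/eqP => /eqP; rewrite addr_eq0 => /eqP E.
  by move: lt; rewrite E nuN // ltxx.
split => //.
have nx0 : - x != 0 by rewrite oppr_eq0.
have yy : (x + y) + - x != 0 by rewrite addrC addKr.
have h1 := (proj2 hnu) (x + y) (- x) xy0 nx0 yy.
rewrite addrC addKr nuN // le_max in h1.
have h2 := (proj2 hnu) x y x0 y0 xy0.
apply/eqP; rewrite eq_le.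
rewrite le_max in h2; case/orP: h2 => h2; rewrite ?h2 ?(le_trans h2 (ltW lt)) /=.
all: case/orP: h1 => // h; by move: (lt_le_trans lt h); rewrite ltxx.
Qed.

Lemma lead (P : V -> Prop) : (forall v, P v -> v != 0) ->
  (forall v w, P v -> P w -> nu v = nu w -> v = w) ->
  forall s c, uniq s -> (forall v, v \in s -> P v) -> (exists2 v, v \in s & c v != 0) ->
  exists b, [/\ b \in s, c b != 0, \sum_(v <- s) c v *: v != 0,
     nu (\sum_(v <- s) c v *: v) = nu b &
     forall v, v \in s -> c v != 0 -> (nu v <= nu b)%O].
Proof.
move=> P0 Pinj; elim=> [|a s IH] c /=; first by move=> _ _ [v].
move=> /andP [nas us] Ps [v vs cv].
rewrite big_cons.
have Ps' : forall v, v \in s -> P v by move=> w ws; apply: Ps; rewrite inE ws orbT.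
have Pa : P a by apply: Ps; rewrite inE eqxx.
case: (boolP (c a == 0)) => [/eqP ca|ca].
  rewrite ca scale0r add0r.
  have [w ws cw] : exists2 w, w \in s & c w != 0.
    move: vs; rewrite inE => /orP [/eqP va|vs']; first by rewrite va ca eqxx in cv.
    by exists v.
  have [b [bs cb s0 nb mb]] := IH c us Ps' (ex_intro2 _ _ w ws cw).
  exists b; split => //; first by rewrite inE bs orbT.
  move=> u; rewrite inE => /orP [/eqP ->|us']; first by rewrite ca eqxx.
  exact: mb.
have a0 : c a *: a != 0 by rewrite scaler_eq0 negb_or ca P0.
have nua : nu (c a *: a) = nu a by apply: (proj1 hnu) => //; exact: P0.
case: (classic (exists2 w, w \in s & c w != 0)) => [ex|nex].
  have [b [bs cb s0 nb mb]] := IH c us Ps' ex.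
  have ab : nu a != nu b.
    apply/eqP => E; have eab := Pinj _ _ Pa (Ps' _ bs) E.
    by rewrite eab bs in nas.
  case: (ltgtP (nu a) (nu b)) => [lt|gt|eq]; last by rewrite eq eqxx in ab.
  - have [h1 h2] := nu_strict a0 s0 ltac:(by rewrite nua nb).
    exists b; split => //; [by rewrite inE bs orbT| by rewrite h2 |].
    move=> u; rewrite inE => /orP [/eqP -> _|us' cu]; [exact: ltW | exact: mb].
  - rewrite addrC. have [h1 h2] := nu_strict s0 a0 ltac:(by rewrite nua nb).
    exists a; split => //; [by rewrite inE eqxx | by rewrite h2 |].
    move=> u; rewrite inE => /orP [/eqP -> _|us' cu]; first by [].
    apply: le_trans (mb u us' cu) _; exact: ltW.
have s0 : \sum_(v <- s) c v *: v = 0.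
  apply: sum_zero_coef => w ws; apply: NNPP => /eqP cw; apply: nex; by exists w.
rewrite s0 addr0; exists a; split => //; [by rewrite inE eqxx|].
move=> u; rewrite inE => /orP [/eqP -> _|us' cu]; first by [].
by exfalso; apply: nex; exists u.
Qed.

Lemma lead_of B (P : V -> Prop) x : adapted_basis nu B -> (forall v, P v -> B v) ->
  in_span P x -> x != 0 -> exists b, P b /\ nu b = nu x.
Proof.
move=> [[_ li _] inj] PB /in_span_uniq [s [c [us Ps E]]] x0.
have ex : exists2 v, v \in s & c v != 0.
  apply: NNPP => nex; move: x0; rewrite E sum_zero_coef ?eqxx // => w ws.
  apply: NNPP => /eqP cw; apply: nex; by exists w.
have [b [bs _ _ nb _]] := lead (basis_nz li) inj us (fun v vs => PB _ (Ps v vs)) ex.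
by exists b; split; [apply: Ps | rewrite E nb].
Qed.

Lemma one_dim B x y : adapted_basis nu B -> x != 0 -> y != 0 -> nu x = nu y ->
  exists a : K, x - a *: y = 0 \/ (x - a *: y != 0 /\ (nu (x - a *: y) < nu x)%O).
Proof.
move=> [[_ li sp] inj] x0 y0 nxy.
have Bnz := basis_nz li.
have [s [c [us Bs Ex]]] := in_span_uniq (sp x I).
have [t [d [ut Bt Ey]]] := in_span_uniq (sp y I).
have exs : exists2 v, v \in s & c v != 0.
  apply: NNPP => nex; move: x0; rewrite Ex sum_zero_coef ?eqxx // => w ws.
  apply: NNPP => /eqP cw; apply: nex; by exists w.
have ext : exists2 v, v \in t & d v != 0.
  apply: NNPP => nex; move: y0; rewrite Ey sum_zero_coef ?eqxx // => w ws.
  apply: NNPP => /eqP cw; apply: nex; by exists w.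
have [b [bs cb _ nb mb]] := lead Bnz inj us Bs exs.
have [b' [bt db _ nb' mb']] := lead Bnz inj ut Bt ext.
have bb : b' = b.
  apply: inj; [exact: Bt|exact: Bs|]; by rewrite -nb' -nb -Ey -Ex nxy.
subst b'.
pose a := c b / d b.
exists a.
set u := undup (s ++ t).
have uu : uniq u by exact: undup_uniq.
have su : {subset s <= u} by move=> w ws; rewrite mem_undup mem_cat ws.
have tu : {subset t <= u} by move=> w wt; rewrite mem_undup mem_cat wt orbT.
have Bu : forall w, w \in u -> B w by move=> w; rewrite mem_undup mem_cat => /orP [/Bs|/Bt].
pose e := fun v => (v \in s)%:R * c v - a * ((v \in t)%:R * d v).
have Exy : x - a *: y = \sum_(v <- u) e v *: v.
  rewrite Ex Ey (sum_pad c us uu su) (sum_pad d ut uu tu) scaler_sumr -sumrB.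
  apply: eq_bigr => v _; by rewrite scalerBl scalerA.
have eb : e b = 0 by rewrite /e bs bt !mul1r /a divfK // subrr.
case: (classic (exists2 v, v \in u & e v != 0)) => [exu|nexu]; last first.
  left; rewrite Exy; apply: sum_zero_coef => w wu; apply: NNPP => /eqP ew.
  apply: nexu; by exists w.
have [b'' [b''u eb'' s0 nb'' _]] := lead Bnz inj uu Bu exu.
right; rewrite Exy; split => //; rewrite nb'' Ex nb.
have neb : b'' != b by apply: contraNneq eb'' => ->; rewrite eb eqxx.
have z : forall (bo : bool) (k : K), ~~ (bo && (k != 0)) -> bo%:R * k = 0.
  by case => k /=; [rewrite mul1r => /negPn/eqP | rewrite mul0r].
have le : (nu b'' <= nu b)%O.
  case: (boolP ((b'' \in s) && (c b'' != 0))) => [/andP [h1 h2]|h1]; first exact: mb.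
  case: (boolP ((b'' \in t) && (d b'' != 0))) => [/andP [h3 h4]|h3]; first exact: mb'.
  by move: eb''; rewrite /e (z _ _ h1) (z _ _ h3) mulr0 subr0 eqxx.
rewrite lt_neqAle le andbT; apply: contra neb => /eqP E; apply/eqP.
by apply: inj => //; [apply: Bu|apply: Bs].
Qed.

Lemma span_lemma B (P : V -> Prop) (W : V -> Prop) (f : C -> V) :
  well_ordered_val nu -> adapted_basis nu B -> subspace W ->
  (forall c, val_image nu (fun _ => True) c -> f c != 0 /\ nu (f c) = c) ->
  (forall x, W x -> x != 0 -> W (f (nu x))) ->
  (forall c, val_image nu (fun _ => True) c -> P (f c)) ->
  forall x, W x -> in_span (fun v => P v /\ W v) x.
Proof.
move=> wo ad [W0 WD WZ] fs fW fP x Wx.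
apply: NNPP => nsp.
have x0 : x != 0.
  apply/eqP => E; apply: nsp; rewrite E; exact: span0.
pose Q c := exists z, [/\ W z, z != 0, nu z = c & ~ in_span (fun v => P v /\ W v) z].
have Qx : exists c, Q c by exists (nu x), x.
have Qim : forall c, Q c -> val_image nu (fun _ => True) c.
  by move=> c [z [_ z0 nz _]]; exists z.
have [m [[z [Wz z0 nz nspz]] mmin]] := wo Q Qx Qim.
have im : val_image nu (fun _ => True) m by exists z.
have [y0 ny] := fs m im.
have Wy : W (f m) by rewrite -nz; apply: fW.
have Py := fP m im.
have [a [E|[E0 lt]]] := one_dim ad z0 y0 ltac:(by rewrite ny nz).
  apply: nspz; have -> : z = a *: f m by apply/eqP; rewrite -subr_eq0 E.
  by apply: spanZ; apply: span_mem.
have Wd : W (z - a *: f m) by apply: WD => //; rewrite -scaleNr; apply: WZ.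
have spd : in_span (fun v => P v /\ W v) (z - a *: f m).
  apply: NNPP => nd.
  have h := mmin _ (ex_intro _ _ (And4 Wd E0 erefl nd)).
  rewrite nz in lt; by move: (lt_le_trans lt h); rewrite ltxx.
apply: nspz; have -> : z = (z - a *: f m) + a *: f m by rewrite subrK.
by apply: spanD => //; apply: spanZ; apply: span_mem.
Qed.

End Aux.

Theorem mainTheorem6 (K : fieldType) (V : lmodType K)
  (dC : Order.disp_t) (C : orderType dC) (nu : V -> C)
  (I : Type) (Sf : I -> V -> Prop) :
  is_valuation nu -> well_ordered_val nu -> injective_val nu ->
  (forall i, subspace (Sf i)) ->
  (nu_compatible nu Sf <->
     exists B, adapted_basis nu B /\ forall i, is_basis_of (Sf i) (setI_ B (Sf i))) /\
  (forall B, adapted_basis nu B -> (forall i, is_basis_of (Sf i) (setI_ B (Sf i))) ->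
     forall J : I -> Prop,
       is_basis_of (bigcap_sp J Sf) (setI_ B (bigcap_sp J Sf)) /\
       (forall c, val_image nu (bigsum_sp J Sf) c <-> exists j, J j /\ val_image nu (Sf j) c)).
Proof.
move=> hnu wo [B0 ad0] Ssub; split.
  split.
    move=> comp.
    pose good c x := x != 0 /\ nu x = c /\ forall i, val_image nu (Sf i) c -> Sf i x.
    have ex : forall c, val_image nu (fun _ => True) c -> exists x, good c x.
      move=> c [x0 [_ x00 nx0]].
      case: (classic (exists i, val_image nu (Sf i) c)) => [ne|nne].
        have [x [Hx x0' nx]] := (comp (fun i => val_image nu (Sf i) c) ne c).2 (fun j h => h).
        by exists x; split => //; split => // i; apply: Hx.
      exists x0; split => //; split => // i h; exfalso; apply: nne; by exists i.
    pose f c := match excluded_middle_informative (exists x, good c x) with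
                | left h => proj1_sig (constructive_indefinite_description _ h)
                | right _ => 0 end.
    have fs : forall c, val_image nu (fun _ => True) c -> good c (f c).
      move=> c im; rewrite /f; case: excluded_middle_informative => [h|h]; last first.
        by exfalso; apply: h; apply: ex.
      exact: proj2_sig (constructive_indefinite_description _ h).
    pose B := fun v => exists c, val_image nu (fun _ => True) c /\ v = f c.
    have fs' : forall c, val_image nu (fun _ => True) c -> f c != 0 /\ nu (f c) = c.
      by move=> c /fs [? [? _]].
    have Bnz : forall v, B v -> v != 0 by move=> v [c [im ->]]; case: (fs' c im).
    have Binj : forall v w, B v -> B w -> nu v = nu w -> v = w.
      move=> v w [c [imc ->]] [d [imd ->]]; case: (fs' c imc) => _ ->.
      by case: (fs' d imd) => _ -> ->.
    have fP : forall c, val_image nu (fun _ => True) c -> B (f c) by move=> c im; exists c.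
    have li : lin_indep B.
      move=> s c us Bs E v vs; apply: NNPP => /eqP cv.
      have [b [_ _ s0 _ _]] := lead hnu Bnz Binj us Bs (ex_intro2 _ _ v vs cv).
      by rewrite E eqxx in s0.
    have adB : adapted_basis nu B.
      split; last exact: Binj.
      split => // x _.
      apply: (span_mono (P := fun v => B v /\ True)); first by move=> v [].
      have sT : subspace (fun _ : V => True) by [].
      exact: (span_lemma hnu (P := B) (W := fun _ => True) wo ad0 sT fs' (fun _ _ _ => Logic.I) fP Logic.I).
    exists B; split => // i; split; first by move=> b [].
      by apply: lin_indep_mono li => v [].
    move=> x Sx.
    apply: (span_lemma hnu (P := B) wo ad0 (Ssub i) fs' _ fP Sx) => y Sy y0.
    have im : val_image nu (fun _ => True) (nu y) by exists y.
    have [_ [_ H]] := fs _ im; apply: H; by exists y.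
  move=> [B [ad hb]] J [j0 Jj0] c; split.
    move=> [x [hx x0 nx]] j Jj; exists x; split => //; exact: hx.
  move=> h.
  have [x0 [S0 x00 nx0]] := h j0 Jj0.
  have [_ _ sp0] := hb j0.
  have [b [[Bb Sb] nb]] := lead_of hnu ad (fun v h => proj1 h) (sp0 x0 S0) x00.
  exists b; split.
  - move=> j Jj.
    have [xj [Sj xj0 nxj]] := h j Jj.
    have [_ _ spj] := hb j.
    have [bj [[Bbj Sbj] nbj]] := lead_of hnu ad (fun v h => proj1 h) (spj xj Sj) xj0.
    have -> : b = bj by apply: (proj2 ad) => //; rewrite nb nbj nx0 nxj.
    exact: Sbj.
  - by case: ad => [[_ liB _] _]; exact: basis_nz liB _ Bb.
  - by rewrite nb.
move=> B ad hb J.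
have [[_ li spB] inj] := ad.
split.
  split; first by move=> b [].
    by apply: lin_indep_mono li => v [].
  move=> x hx.
  have [s [c [us Bs Ex]]] := in_span_uniq (spB x Logic.I).
  exists (filter (fun v => c v != 0) s), c; split.
    move=> v; rewrite mem_filter => /andP [cv vs]; split; first exact: Bs.
    move=> j Jj; have [_ _ spj] := hb j.
    have [t [d [ut Bt Et]]] := in_span_uniq (spj x (hx j Jj)).
    have [vt _] := coord_uniq li us ut Bs (fun v h => proj1 (Bt v h))
                     (etrans (esym Ex) Et) vs cv.
    exact: (proj2 (Bt v vt)).
  rewrite Ex big_filter [RHS]big_mkcond /=; apply: eq_bigr => v _.
  by have [->|_] := eqVneq (c v) 0; rewrite ?scale0r.
move=> c; split.
  move=> [x [[pl [Hpl Ex]] x0 nx]].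
  pose G := fun v => B v /\ exists j, J j /\ Sf j v.
  have spx : in_span G x.
    rewrite Ex; elim: pl Hpl {Ex} => [|p pl IH] H; first by rewrite big_nil; exact: span0.
    rewrite big_cons; apply: spanD; last first.
      by apply: IH => q hq; apply: H; right.
    have [Jp Sp] := H p (or_introl erefl).
    have [_ _ sp] := hb p.1.
    apply: span_mono (sp _ Sp) => v [Bv Sv]; split => //; by exists p.1.
  have [b [[Bb [j [Jj Sb]]] nb]] := lead_of hnu ad (fun v h => proj1 h) spx x0.
  exists j; split => //; exists b; split => //; first exact: basis_nz li _ Bb.
  by rewrite nb.
move=> [j [Jj [x [Sx x0 nx]]]]; exists x; split => //.
exists [:: (j, x)]; split; last by rewrite big_seq1.
by move=> p [<-|[]].
Qed.
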